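(* Consider the faulty-starter delivery problem described in the context, with finisher starting position $(x,y)\neq(0,0)$, $y\ge0$, and $(x,y)\in\overline{D}(1,1)$. Then for every $a\in[0,1]$ and every algorithm $\mathcal{A}_a$ of the class described in the context, $\min\{\mathrm{CR}_{\mathcal{A}_d},\mathrm{CR}_{\mathcal{A}_0}\}\le \mathrm{CR}_{\mathcal{A}_a}$.
   Context: Setting. In the plane let $S=(0,0)$ and $T=(1,0)$. A ''starter'' drone carrying a package starts at $S$ at time $0$ and moves at unit speed along $\overline{ST}$ towards $T$. At an unknown time $t\in[0,1]$ it fails and stays forever at $(t,0)$ with the package (at time $s$ the package is at $(\min\{s,t\},0)$). A ''finisher'' drone starts at time $0$ at $P=(x,y)$ with $y\ge0$, moves at unit speed and can stop and turn instantaneously. The package can be handed over only when the drones are co-located; it is delivered at the first time the finisher, carrying the package, is at $T$. An online algorithm $\mathcal{A}$ specifies the finisher's trajectory using only $(x,y)$; $A(t)$ is its delivery time for fail time $t$. $\mathrm{Opt}(t)=\max\{1,\sqrt{(x-t)^2+y^2}+1-t\}$ is the optimal offline delivery time. $\mathrm{CR}_{\mathcal{A}}(t)=A(t)/\mathrm{Opt}(t)$ and $\mathrm{CR}_{\mathcal{A}}=\sup_{0\le t\le1}\mathrm{CR}_{\mathcal{A}}(t)$. $\overline{D}(c,r)$ denotes the closed disk of radius $r$ centered at $(c,0)$. Algorithms. $\mathcal{A}_0$: the finisher goes straight to $S$, then along $\overline{ST}$ towards $T$ until it finds the package, then on to $T$. $\mathcal{A}_d$ (for $x>0$): with $d=(x^2+y^2)/(2x)$,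 the finisher goes straight to $(d,0)$, then towards $S$ along the segment until it finds the package, then goes to $T$. For $a\in[0,1]$, an algorithm $\mathcal{A}_a$ is any online algorithm in which the finisher moves from $P$ along a straight line to $(a,0)$ and afterwards remains within $\overline{ST}$ until it picks up the package, after which it goes to $T$. *)

(* Defs.v *)
From HB Require Import structures.
From mathcomp Require Import all_boot all_order all_algebra.
From mathcomp Require Import all_classical all_reals.
From mathcomp Require Import ereal.
Set Implicit Arguments. Unset Strict Implicit. Unset Printing Implicit Defensive.
Import Order.TTheory GRing.Theory Num.Theory.
Local Open Scope ring_scope.
Local Open Scope classical_set_scope.

Section Delivery.
Variable R : realType.

Definition dist (p q : R * R) : R :=
  Num.sqrt ((p.1 - q.1) ^+ 2 + (p.2 - q.2) ^+ 2).

(* position of the package at time s when the starter fails at time t *)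
Definition pkg (t s : R) : R * R := (Num.min s t, 0).

(* point at time s on the unit-speed straight motion from p towards q
   (total length L = dist p q); meaningful for 0 <= s <= L *)
Definition seg (p q : R * R) (s : R) : R * R :=
  let L := dist p q in
  ((1 - s / L) * p.1 + (s / L) * q.1, (1 - s / L) * p.2 + (s / L) * q.2).

(* f is a finisher (pre-pickup) trajectory starting at P, speed at most 1 *)
Definition trajectory (P : R * R) (f : R -> R * R) : Prop :=
  f 0 = P /\
  forall s1 s2, 0 <= s1 -> 0 <= s2 -> dist (f s1) (f s2) <= `|s1 - s2|.

(* Delivery time for fail time t: the package is picked up at a time s when
   finisher and package are co-located (the earliest such time is optimal,
   since s + 1 - min s t is nondecreasing in s); then the finisher goes
   straight to T = (1,0), at distance 1 - min s t.  +oo if never met. *)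
Definition delivery (f : R -> R * R) (t : R) : \bar R :=
  ereal_inf [set ((s + 1 - Num.min s t)%:E) | s in
               [set s | 0 <= s /\ f s = pkg t s]].

Definition Opt (x y t : R) : R := Num.max 1 (dist (x, y) (t, 0) + 1 - t).

Definition CR (x y : R) (f : R -> R * R) : \bar R :=
  ereal_sup [set (delivery f t * ((Opt x y t)^-1)%:E)%E | t in `[0, 1]].

Definition traj0 (x y : R) (s : R) : R * R :=
  let L := dist (x, y) (0, 0) in
  if s <= L then seg (x, y) (0, 0) s else (Num.min (s - L) 1, 0).

Definition dpt (x y : R) : R := (x ^+ 2 + y ^+ 2) / (2 * x).

Definition trajd (x y : R) (s : R) : R * R :=
  let d := dpt x y in
  let L := dist (x, y) (d, 0) in
  if s <= L then seg (x, y) (d, 0) s else (Num.max (d - (s - L)) 0, 0).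

Definition alg_a (x y a : R) (f : R -> R * R) : Prop :=
  trajectory (x, y) f /\
  (forall s, 0 <= s <= dist (x, y) (a, 0) -> f s = seg (x, y) (a, 0) s) /\
  (forall s, dist (x, y) (a, 0) <= s -> (f s).2 = 0 /\ 0 <= (f s).1 <= 1).

End Delivery.

(* Main.v *)
Require Import Defs.
From HB Require Import structures.
From mathcomp Require Import all_boot all_order all_algebra.
From mathcomp Require Import all_classical all_reals.
From mathcomp Require Import ereal.
From mathcomp Require Import ring lra.
Import Order.TTheory GRing.Theory Num.Theory.
Local Open Scope ring_scope.
Set Implicit Arguments. Unset Strict Implicit.
Section P_A.
Variable R : realType.
Implicit Types x y t s p q a c : R.

Lemma dist_axis p q : dist (p,0) (q,0) = `|p - q| :> R.
Proof. by rewrite /dist /= subrr [0 ^+ 2]expr2 mulr0 addr0 sqrtr_sqr. Qed.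

Lemma dist_sq x y t : dist (x,y) (t,0) ^+ 2 = (x - t)^+2 + y^+2 :> R.
Proof. by rewrite /dist /= subr0 sqr_sqrtr // addr_ge0 // sqr_ge0. Qed.

Lemma dist_ge0 (u v : R * R) : 0 <= dist u v.
Proof. exact: sqrtr_ge0. Qed.

Lemma traj_lip P f s1 s2 p q : trajectory P f -> 0 <= s1 -> 0 <= s2 ->
  f s1 = (p,0) -> f s2 = (q,0) -> `|p - q| <= `|s1 - s2|.
Proof. by move=> [_ H] h1 h2 e1 e2; have := H _ _ h1 h2; rewrite e1 e2 dist_axis. Qed.

Lemma traj_from0 x y f s p : trajectory (x,y) f -> 0 <= s -> f s = (p,0) ->
  dist (x,y) (p,0) <= s.
Proof.
move=> [h0 H] hs e; have := H _ _ (lexx 0) hs.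
by rewrite h0 e sub0r normrN ger0_norm.
Qed.

Lemma Opt_ge1 x y t : 1 <= Opt x y t.
Proof. by rewrite /Opt le_max lexx. Qed.

Lemma Opt_ge x y t : dist (x,y) (t,0) + 1 - t <= Opt x y t.
Proof. by rewrite /Opt le_max lexx orbT. Qed.

Lemma Opt_gt0 x y t : 0 < Opt x y t.
Proof. exact: lt_le_trans ltr01 (Opt_ge1 x y t). Qed.

Lemma frac_le c c' O O' : 0 < O -> 0 < O' -> c * O' <= c' * O -> c / O <= c' / O'.
Proof. by move=> h1 h2 h; rewrite ler_pdivrMr // mulrAC ler_pdivlMr. Qed.

Lemma ratio_ge (D : \bar R) c O : 0 < O -> (c%:E <= D)%E ->
  ((c / O)%:E <= D * (O^-1)%:E)%E.
Proof.
move=> hO h; rewrite EFinM; apply: lee_wpmul2r => //.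
by rewrite lee_fin invr_ge0 ltW.
Qed.

Lemma ratio_le (D : \bar R) c O : 0 < O -> (D <= c%:E)%E ->
  (D * (O^-1)%:E <= (c / O)%:E)%E.
Proof.
move=> hO h; rewrite EFinM; apply: lee_wpmul2r => //.
by rewrite lee_fin invr_ge0 ltW.
Qed.

Lemma deliv_lb f t c : (forall s, 0 <= s -> f s = pkg t s -> c <= s + 1 - Num.min s t) ->
  (c%:E <= delivery f t)%E.
Proof. by move=> H; apply: le_ereal_inf_tmp => _ [s [hs hf] <-]; rewrite lee_fin; apply: H. Qed.

Lemma deliv_ub f t s : 0 <= s -> f s = pkg t s ->
  (delivery f t <= (s + 1 - Num.min s t)%:E)%E.
Proof. by move=> hs hf; apply: ge_ereal_inf; exists ((s + 1 - Num.min s t)%:E) => //; exists s. Qed.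

Lemma deliv_lt f t c : (delivery f t < c%:E)%E ->
  exists s, [/\ 0 <= s, f s = pkg t s & s + 1 - Num.min s t < c].
Proof. by move=> /ereal_inf_lt [_ [s [hs hf] <-]]; rewrite lte_fin => h; exists s. Qed.

Lemma deliv_ge1 f t : (1%:E <= delivery f t)%E.
Proof.
apply: deliv_lb => s _ _.
have : Num.min s t <= s by rewrite ge_min lexx.
lra.
Qed.

Lemma CR_ge x y f t : 0 <= t <= 1 ->
  (delivery f t * ((Opt x y t)^-1)%:E <= CR x y f)%E.
Proof. by move=> ht; apply: ereal_sup_ubound; exists t => //; rewrite /= in_itv /= ht. Qed.

Lemma CR_le x y f M : (forall t, 0 <= t <= 1 ->
   (delivery f t * ((Opt x y t)^-1)%:E <= M)%E) -> (CR x y f <= M)%E.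
Proof. by move=> H; apply: ge_ereal_sup => _ [t ht <-]; apply: H; move: ht; rewrite /= in_itv. Qed.

End P_A.
Unset Implicit Arguments. Set Strict Implicit.
Section P_B.
Variable R : realType.
Implicit Types x y t s p q a c : R.

Lemma dd x y : 0 < x -> 2 * x * dpt x y = x^+2 + y^+2.
Proof. by move=> hx; rewrite /dpt; field; rewrite gt_eqF. Qed.

Lemma dist_d x y : 0 < x -> dist (x,y) (dpt x y, 0) = dpt x y.
Proof.
move=> hx; have h := dd x y hx.
have d0 : 0 <= dpt x y by nra.
rewrite /dist /= subr0.
have -> : (x - dpt x y) ^+ 2 + y ^+ 2 = dpt x y ^+ 2 by nra.
by rewrite sqrtr_sqr ger0_norm.
Qed.

Lemma trajd_ub1 x y t : 0 < x -> dpt x y <= t ->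
  (delivery (trajd x y) t <= 1%:E)%E.
Proof.
move=> hx ht; have h := dd x y hx.
have d0 : 0 < dpt x y.
  have : 0 < x ^+ 2 by rewrite exprn_gt0.
  have : 0 <= y ^+ 2 by rewrite sqr_ge0.
  nra.
have -> : 1 = dpt x y + 1 - Num.min (dpt x y) t by rewrite min_l //; ring.
apply: deliv_ub; first exact: ltW.
rewrite /trajd /pkg /= dist_d // lexx /seg dist_d // divff ?gt_eqF // min_l //.
by congr pair; rewrite /= subrr mul0r mul1r add0r.
Qed.

Lemma trajd_ub2 x y t : 0 < x -> 0 <= t -> t < dpt x y ->
  (delivery (trajd x y) t <= (1 + 2 * dpt x y - 2 * t)%:E)%E.
Proof.
move=> hx t0 ht.
have -> : 1 + 2 * dpt x y - 2 * t = (2 * dpt x y - t) + 1 - Num.min (2 * dpt x y - t) t.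
  by rewrite min_r; [ring | lra].
apply: deliv_ub; first lra.
rewrite /trajd /pkg /= dist_d //.
have -> : (2 * dpt x y - t <= dpt x y) = false by apply/negbTE; rewrite -ltNge; lra.
rewrite min_r; last lra.
rewrite max_l; last lra.
congr pair; ring.
Qed.

Lemma traj0_ub x y t : (x, y) != (0, 0) -> 0 <= t <= 1 ->
  (delivery (traj0 x y) t <= (dist (x,y) (0,0) + 1)%:E)%E.
Proof.
move=> hP /andP[t0 t1].
set L := dist (x,y) (0,0).
have L0 : 0 < L.
  rewrite lt_neqAle dist_ge0 andbT; apply/eqP => hL.
  have := dist_sq x y 0; rewrite -/L -hL subr0 expr2 mul0r => e.
  have hx : x = 0 by apply/eqP; rewrite -sqrf_eq0; apply/eqP; nra.
  have hy : y = 0 by apply/eqP; rewrite -sqrf_eq0; apply/eqP; nra.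
  by rewrite hx hy eqxx in hP.
have -> : L + 1 = (L + t) + 1 - Num.min (L + t) t by rewrite min_r; [ring | lra].
apply: deliv_ub; first lra.
rewrite /traj0 /pkg /= -/L.
case: ifP => [/idP hle | /negbT hle].
  have -> : t = 0 by apply: le_anti; rewrite t0 andbT; lra.
  by rewrite addr0 min_r ?(ltW L0) // /seg -/L divff ?gt_eqF // /= subrr !mul0r mul1r !add0r.
have -> : L + t - L = t by ring.
rewrite min_l // min_r //; lra.
Qed.
End P_B.
Arguments dd {R}. Arguments dist_d {R}. Arguments trajd_ub1 {R}. Arguments trajd_ub2 {R}. Arguments traj0_ub {R}.
Section P_C.
Variable R : realType.
Implicit Types x y t s p q a c : R.

Lemma Qpos (L u : R) : 0 <= L -> L <= 2 -> 0 <= u ->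
  0 <= L^+2 - L^+3/2 + 2*u*L^+2 + u^+2*L^+2/2 - 3*u*L + 3*u^+2 + u^+3 - u^+2*L.
Proof.
move=> h0 h2 hu.
have h1 : 0 <= L^+2 - 3*u*L + 3*u^+2 by have := sqr_ge0 (2*L - 3*u); have := sqr_ge0 u; nra.
have h3 : 0 <= (2 - L) * (L^+2 - 3*u*L + 3*u^+2) by apply: mulr_ge0; lra.
have h4 : 0 <= u * L^+2 by apply: mulr_ge0 => //; apply: sqr_ge0.
have h5 : 0 <= u^+2 * L^+2 by apply: mulr_ge0; apply: sqr_ge0.
have h6 : 0 <= u^+2 * L by apply: mulr_ge0 => //; apply: sqr_ge0.
have h7 : 0 <= u^+3 by apply: exprn_ge0.
have -> : L^+2 - L^+3/2 + 2*u*L^+2 + u^+2*L^+2/2 - 3*u*L + 3*u^+2 + u^+3 - u^+2*L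
  = ((2 - L) * (L^+2 - 3*u*L + 3*u^+2) + u * L^+2 + u^+2 * L^+2 + u^+2 * L + 2 * u^+3) / 2 by field.
apply: divr_ge0; lra.
Qed.

Lemma keyK x y t (L Lt d : R) : 0 < x -> (x-1)^+2 + y^+2 <= 1 -> 0 <= L -> 0 <= Lt ->
  L^+2 = x^+2+y^+2 -> Lt^+2 = (x-t)^+2 + y^+2 -> 2*x*d = x^+2+y^+2 ->
  0 <= t -> t < d -> (1 + 2*d - 2*t)*(1 + L) <= (3 + Lt - t)*(1 + Lt - t).
Proof.
move=> hx hD hL hLt eL eLt ed ht htd.
set u := Lt - t.
have hu : 0 <= u.
  rewrite /u subr_ge0; nra.
have hx2 : x <= 2 by nra.
have hL2 : L <= 2 by nra.
have hLx : L^+2 <= 2 * x by nra.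
have hrel : u^+2 + 2*u*t = L^+2 - 2*x*t by rewrite /u; nra.
have hQ := @Qpos L u hL hL2 hu.
have hA : 0 <= 2 - L + 4*u + u^+2 by nra.
have hH : 0 <= x*(2 - L + 4*u + u^+2) - 3*u*L + 3*u^+2 + u^+3 - u^+2*L.
  have : L^+2/2 * (2 - L + 4*u + u^+2) <= x * (2 - L + 4*u + u^+2).
    apply: ler_wpM2r => //; lra.
  lra.
have hG : 0 <= x*(u+x)*(2 - L + 4*u + u^+2) - u*(L^+2 + x*u)*(1+L).
  have : u * L^+2 * (1 + L) <= u * (2 * x) * (1 + L).
    apply: ler_wpM2r; first lra.
    by apply: ler_wpM2l.
  nra.
set F := x*(3+u)*(1+u) - (x + L^+2 - 2*x*t)*(1+L).
have eG : (u + x) * F = x*(u+x)*(2 - L + 4*u + u^+2) - u*(L^+2 + x*u)*(1+L).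
  have et : 2*t*(u+x) = L^+2 - u^+2 by lra.
  have e1 : x + L^+2 - 2*x*t = x + u^+2 + 2*u*t by lra.
  have e2 : (u + x) * (x + u^+2 + 2*u*t) = x*(u+x) + u*(L^+2 + x*u).
    have -> : (u + x) * (x + u^+2 + 2*u*t) = x*(u+x) + u^+2*(u+x) + u*(2*t*(u+x)) by ring.
    rewrite et; ring.
  rewrite /F e1.
  have -> : (u + x) * (x * (3 + u) * (1 + u) - (x + u ^+ 2 + 2 * u * t) * (1 + L))
    = x*(u+x)*(3+u)*(1+u) - (1+L) * ((u + x) * (x + u^+2 + 2*u*t)) by ring.
  rewrite e2; ring.
have hF : 0 <= F.
  have hux : 0 < u + x by lra.
  rewrite -(pmulr_rge0 _ hux) eG //.
have : x * ((1 + 2*d - 2*t)*(1 + L)) <= x * ((3 + u)*(1 + u)).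
  have -> : x * ((1 + 2*d - 2*t)*(1 + L)) = (x + L^+2 - 2*x*t)*(1+L) by nra.
  rewrite /F in hF; lra.
rewrite ler_pM2l // /u.
have -> : 3 + Lt - t = 3 + (Lt - t) by ring.
have -> : 1 + Lt - t = 1 + (Lt - t) by ring.
done.
Qed.
End P_C.
Arguments Qpos {R}. Arguments keyK {R}.
Section P_D.
Variable R : realType.
Implicit Types x y t s p q a c : R.

Lemma La_pos x y a : 0 < y -> 0 < dist (x,y) (a,0).
Proof.
move=> hy; rewrite lt_neqAle dist_ge0 andbT; apply/eqP => h.
have := dist_sq x y a; rewrite -h expr2 mul0r => e.
have : 0 < y^+2 by rewrite exprn_gt0.
have : 0 <= (x - a)^+2 by apply: sqr_ge0.
lra.
Qed.

Lemma f_La x y a f : alg_a x y a f -> 0 < y -> f (dist (x,y) (a,0)) = (a,0).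
Proof.
move=> [_ [H _]] hy.
rewrite H; last by rewrite dist_ge0 lexx.
by rewrite /seg divff ?gt_eqF ?La_pos // /= subrr !mul0r !mul1r !add0r.
Qed.

Lemma seg_axis x y a f s p : alg_a x y a f -> 0 < y -> 0 <= s -> f s = (p,0) ->
  dist (x,y) (a,0) <= s.
Proof.
move=> hf hy hs e; rewrite leNgt; apply/negP => hlt.
have hLa := La_pos x y a hy.
have := hf.2.1 s; rewrite hs ltW // => /(_ isT).
rewrite e /seg => -[_ e2].
have h1 : s / dist (x,y) (a,0) < 1 by rewrite ltr_pdivrMr // mul1r.
have : 0 < (1 - s / dist (x,y) (a,0)) * y by apply: mulr_gt0 => //; lra.
move: e2; rewrite /= mulr0 addr0 => <-.
by rewrite ltxx.
Qed.

Lemma pick_a x y a f s p : alg_a x y a f -> 0 < y -> 0 <= s -> f s = (p,0) ->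
  `|p - a| <= s - dist (x,y) (a,0).
Proof.
move=> hf hy hs e.
have hLs := seg_axis _ _ _ _ _ _ hf hy hs e.
have := traj_lip hf.1 hs (dist_ge0 _ _) e (f_La _ _ _ _ hf hy).
by rewrite (ger0_norm (x := s - _)) // subr_ge0.
Qed.
End P_D.
Arguments La_pos {R}. Arguments f_La {R}. Arguments seg_axis {R}. Arguments pick_a {R}.
Theorem lemma3 (R : realType) (x y : R) :
  (x, y) != (0, 0) -> 0 <= y -> (x - 1) ^+ 2 + y ^+ 2 <= 1 ->
  forall (a : R), 0 <= a <= 1 ->
  forall (f : R -> R * R), alg_a x y a f ->
  (Order.min (CR x y (trajd x y)) (CR x y (traj0 x y)) <= CR x y f)%E.
Proof.
move=> hP hy hD a /andP[ha0 ha1] f hf.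
have hx0 : 0 <= x by have := sqr_ge0 y; nra.
have hx : 0 < x.
  rewrite lt_neqAle hx0 andbT; apply/eqP => x0.
  have y0 : y = 0.
    apply/eqP; rewrite -sqrf_eq0; apply/eqP; apply: le_anti; rewrite sqr_ge0 andbT.
    move: hD; rewrite -x0; nra.
  by move: hP; rewrite -x0 y0 eqxx.
have hd2 : 2 * x * dpt x y = x^+2 + y^+2 := dd x y hx.
set d := dpt x y in hd2 *.
have hd1 : d <= 1 by nra.
have hd0 : 0 < d.
  have : 0 < x ^+ 2 by rewrite exprn_gt0.
  have : 0 <= y ^+ 2 by rewrite sqr_ge0.
  nra.
have hx2d : x <= 2 * d by have := sqr_ge0 y; nra.
have eL0 : dist (x,y) (0,0) ^+ 2 = x^+2 + y^+2 by rewrite dist_sq subr0.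
have hL0 : 0 <= dist (x,y) (0,0) := dist_ge0 _ _.
set L0 := dist (x,y) (0,0) in eL0 hL0 *.
have hOpt1 : Opt x y 1 = 1.
  rewrite /Opt max_l //; have := dist_sq x y 1; have := dist_ge0 (x,y) (1,0).
  set D1 := dist (x,y) (1,0) => h1 h2; nra.
have hOpt0 : Opt x y 0 = L0 + 1 by rewrite /Opt subr0 max_r -/L0 //; lra.
have CRf1 : (1%:E <= CR x y f)%E.
  apply: (le_trans _ (CR_ge x y f (t:=1) _)); last by rewrite ler01 lexx.
  by rewrite hOpt1 invr1 mule1 deliv_ge1.
have rd1 : forall t, 0 <= t <= 1 -> d <= t ->
    (delivery (trajd x y) t * ((Opt x y t)^-1)%:E <= 1%:E)%E.
  move=> t ht hdt.
  apply: le_trans (ratio_le (Opt_gt0 x y t) (trajd_ub1 x y t hx hdt)) _.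
  by rewrite lee_fin ler_pdivrMr ?Opt_gt0 // mul1r Opt_ge1.
have rd2 : forall t, 0 <= t -> t < d ->
    (delivery (trajd x y) t * ((Opt x y t)^-1)%:E <= ((1 + 2*d - 2*t) / Opt x y t)%:E)%E.
  by move=> t t0 htd; apply: (ratio_le (Opt_gt0 x y t) (trajd_ub2 x y t hx t0 htd)).
have [y0|ypos] : y = 0 \/ 0 < y.
  by move: hy; rewrite le_eqVlt => /orP[/eqP<-|->]; [left|right].
- rewrite ge_min; apply/orP; left.
  apply: le_trans CRf1.
  apply: CR_le => t ht.
  case: (leP d t) => hdt; first exact: rd1.
  apply: le_trans (rd2 t _ hdt) _; first by case/andP: ht.
  rewrite lee_fin ler_pdivrMr ?Opt_gt0 // mul1r.
  apply: le_trans (Opt_ge x y t).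
  have := dist_sq x y t; have := dist_ge0 (x,y) (t,0).
  set Dt := dist (x,y) (t,0) => hDt eDt.
  rewrite y0 in hd2 eDt.
  have h2d : 2 * d <= x by nra.
  have : x - t <= Dt.
    rewrite leNgt; apply/negP => hlt.
    have : Dt ^+ 2 < (x - t) ^+ 2 by rewrite ltr_pXn2r ?nnegrE //; lra.
    by rewrite eDt [0 ^+ 2]expr2 mul0r addr0 ltxx.
  lra.
- case: (leP d a) => hda.
  + rewrite ge_min; apply/orP; left.
    apply: CR_le => t ht.
    case: (leP d t) => hdt; first exact: le_trans (rd1 t ht hdt) CRf1.
    case/andP: ht => t0 t1.
    apply: le_trans (rd2 t t0 hdt) _.
    apply: (le_trans _ (CR_ge x y f (t:=t) _)); last by rewrite t0 t1.
    apply: ratio_ge; first exact: Opt_gt0.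
    apply: deliv_lb => s hs hfs.
    have hpt : Num.min s t <= t by rewrite ge_min lexx orbT.
    have := pick_a _ _ _ _ _ _ hf ypos hs hfs.
    have eLa := dist_sq x y a; have hLa := dist_ge0 (x,y) (a,0).
    set La := dist (x,y) (a,0) in eLa hLa *.
    have hLad : 2 * d <= La + a.
      have e : La^+2 - (2*d - a)^+2 = 2*(d-a)*(x - 2*d).
        rewrite eLa; have -> : y^+2 = 2*x*d - x^+2 by lra.
        ring.
      have : 0 <= 2*(d-a)*(x - 2*d) by nra.
      rewrite -e => h.
      rewrite leNgt; apply/negP => hlt.
      have : La ^+ 2 < (2*d - a) ^+ 2 by rewrite ltr_pXn2r ?nnegrE //; lra.
      lra.
    rewrite ler_norml => /andP[h1 h2]; lra.
  + have eLa := dist_sq x y a; have hLa := dist_ge0 (x,y) (a,0).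
    have hpk := pick_a _ _ _ _ _ _ hf ypos.
    set La := dist (x,y) (a,0) in eLa hLa hpk *.
    have hLaa : a < La.
      rewrite ltNge; apply/negP => hle.
      have : La ^+ 2 <= a ^+ 2 by rewrite ler_pXn2r ?nnegrE //.
      rewrite eLa; nra.
    case: (leP ((L0+1)%:E) (CR x y f)) => hC.
    * rewrite ge_min; apply/orP; right.
      apply: le_trans hC.
      apply: CR_le => t ht.
      apply: le_trans (ratio_le (Opt_gt0 x y t) (traj0_ub x y t hP ht)) _.
      rewrite lee_fin ler_pdivrMr ?Opt_gt0 // -/L0.
      have := Opt_ge1 x y t; nra.
    * have hd1' : (delivery f 1 < (L0+1)%:E)%E.
        apply: le_lt_trans hC.
        have := CR_ge x y f (t:=1); rewrite hOpt1 invr1 mule1; apply.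
        by rewrite ler01 lexx.
      have [s1 [hs1 hfs1 hs1lt]] := deliv_lt hd1'.
      have hLs1 := hpk _ _ hs1 hfs1.
      have hs1ge1 : 1 <= s1.
        rewrite leNgt; apply/negP => hs1l.
        move: hLs1; rewrite (min_l (ltW hs1l)) ler_norml => /andP[_ h]; lra.
      rewrite /pkg min_r // in hfs1 hs1lt hLs1.
      rewrite ge_min; apply/orP; left.
      apply: CR_le => t0 ht0.
      case: (leP d t0) => hdt; first exact: le_trans (rd1 t0 ht0 hdt) CRf1.
      case/andP: ht0 => t00 t01.
      apply: le_trans (rd2 t0 t00 hdt) _.
      case: (leP ((1 + 2*d - 2*t0)%:E) (delivery f t0)) => hc.
      - apply: (le_trans _ (CR_ge x y f (t:=t0) _)); last by rewrite t00 t01.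
        exact: ratio_ge (Opt_gt0 _ _ _) hc.
      - have [st [hst hfst hstlt]] := deliv_lt hc.
        have hLst := hpk _ _ hst hfst.
        have hst_t0 : t0 <= st.
          rewrite leNgt; apply/negP => hl.
          move: hLst; rewrite (min_l (ltW hl)) ler_norml => /andP[_ h]; lra.
        rewrite /pkg min_r // in hfst hstlt hLst.
        have hlip := traj_lip hf.1 hst hs1 hfst hfs1.
        rewrite (ler0_norm (x := t0 - 1)) in hlip; last lra.
        have hst_s1 : st <= s1.
          rewrite leNgt; apply/negP => hl.
          move: hlip; rewrite ger0_norm; lra.
        rewrite (ler0_norm (x := st - s1)) in hlip; last lra.
        have hDt := traj_from0 hf.1 hst hfst.
        have hDt0 := dist_ge0 (x,y) (t0,0).
        set Dt := dist (x,y) (t0,0) in hDt hDt0 *.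
        have h0 : ((3 + Dt - t0)%:E <= delivery f 0)%E.
          apply: deliv_lb => s0 hs0 hfs0.
          rewrite /pkg min_r // in hfs0.
          rewrite min_r //.
          have hL0s0 := traj_from0 hf.1 hs0 hfs0; rewrite -/L0 in hL0s0.
          have hl := traj_lip hf.1 hs0 hs1 hfs0 hfs1.
          rewrite sub0r normrN normr1 in hl.
          have hs10 : s1 <= s0.
            rewrite leNgt; apply/negP => hl2.
            move: hl; rewrite ler0_norm; lra.
          move: hl; rewrite ger0_norm; lra.
        apply: (le_trans _ (CR_ge x y f (t:=0) _)); last by rewrite lexx ler01.
        apply: (le_trans _ (ratio_ge (Opt_gt0 x y 0) h0)).
        rewrite hOpt0 lee_fin.
        apply: frac_le; [exact: Opt_gt0 | lra | ].
        have hK := keyK x y t0 L0 Dt d hx hD hL0 hDt0 eL0 (dist_sq x y t0) hd2 t00 hdt.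
        have hO := Opt_ge x y t0; rewrite -/Dt in hO.
        have : (3 + Dt - t0) * (1 + Dt - t0) <= (3 + Dt - t0) * Opt x y t0.
          by apply: ler_wpM2l; lra.
        have -> : L0 + 1 = 1 + L0 by ring.
        lra.
Qed.
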